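(* Let $M$ be a $3$-connected matroid, let $\mathcal{T}$ be a tangle of $M$, let $N$ be a minor of $M$, and let $X_1,\ldots,X_r$ be long lines of the tangle matroid $M(\mathcal{T})$ with $\rank_{\mathcal{T}}(X_1\cup\cdots\cup X_r)=2r$. Suppose that for all $i\in\{1,\ldots,r\}$: (1) $X_i\cap E(N)=\emptyset$; (2) $X_i$ contains an inclusionwise maximal fan $F_i$ of $M$ of length at least four; (3) there is an element $e_i\in F_i$ such that $M\setminus e_i$ is $3$-connected with $N$ as a minor. Then $M\setminus\{e_1,\ldots,e_r\}$ is $3$-connected with $N$ as a minor.
   Context: $\lambda_M(X) = \rank_M(X) + \rank_M(E(M)\setminus X) - \rank(M)$. A tangle of order $\theta$ of $M$ is a collection $\mathcal{T}$ of subsets of $E(M)$ such that: (i) $\lambda_M(X)<\theta$ for all $X\in\mathcal{T}$; (ii) for every $X\subseteq E(M)$ with $\lambda_M(X)<\theta$, either $X\in\mathcal{T}$ or $E(M)\setminus X\in\mathcal{T}$; (iii) if $X,Y,Z\in\mathcal{T}$ then $X\cup Y\cup Z\neq E(M)$; (iv) $E(M)\setminus\{e\}\notin\mathcal{T}$ for every $e\in E(M)$. The tangle matroid $M(\mathcal{T})$ has rank function $\rank_{\mathcal{T}}(X) = \min\{\lambda_M(Y): X\subseteq Y\in\mathcal{T}\}$ if some member of $\mathcal{T}$ contains $X$, and $\rank_{\mathcal{T}}(X)=\theta$ otherwise. A long line is a closed set of rank $2$ with at least $3$ elements. A triangle is a $3$-element set $T$ with $M|T\cong U_{2,3}$, a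 triad is a triangle of $M^*$. A fan of $M$ is a sequence $(x_1,\ldots,x_k)$, $k\geq3$, of distinct elements such that $\{x_1,x_2,x_3\}$ is a triangle or a triad, and for each $i\in\{1,\ldots,k-3\}$, if $\{x_i,x_{i+1},x_{i+2}\}$ is a triangle then $\{x_{i+1},x_{i+2},x_{i+3}\}$ is a triad, and if it is a triad then $\{x_{i+1},x_{i+2},x_{i+3}\}$ is a triangle; its length is $k$. ''$M'$ has $N$ as a minor'' means $N$ itself (with labelled ground set) equals $M'/C\setminus D$ for some disjoint $C,D\subseteq E(M')$. *)

(* Defs.v *)
(* Finite matroids, given by their rank function, on a
   ground set E : {set T} inside an ambient finite type T (so that minors
   keep their labelled ground sets). *)
From mathcomp Require Import all_boot.
Set Implicit Arguments. Unset Strict Implicit. Unset Printing Implicit Defensive.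

Section Matroids.
Variable T : finType.

(* A matroid: ground set and rank function; the rank axioms are required on
   subsets of the ground set only (values outside are irrelevant). *)
Record matroid := Matroid {
  ground : {set T};
  rk : {set T} -> nat;
  rk_card : forall X : {set T}, X \subset ground -> rk X <= #|X|;
  rk_mono : forall X Y : {set T}, X \subset Y -> Y \subset ground -> rk X <= rk Y;
  rk_submod : forall X Y : {set T}, X \subset ground -> Y \subset ground ->
      rk (X :|: Y) + rk (X :&: Y) <= rk X + rk Y
}.

Definition mrank (M : matroid) : nat := rk M (ground M).

Definition mdel (M : matroid) (D : {set T}) : matroid.
Proof.
refine (@Matroid (ground M :\: D) (rk M) _ _ _).
- by move=> X HX; apply: rk_card; apply: subset_trans HX (subsetDl _ _).
- by move=> X Y HXY HY; apply: rk_mono HXY (subset_trans HY (subsetDl _ _)).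
- by move=> X Y HX HY; apply: rk_submod;
    [apply: subset_trans HX (subsetDl _ _) | apply: subset_trans HY (subsetDl _ _)].
Defined.

(* "M' has N as a minor": N itself (labelled ground set) equals M'/C\D for
   some disjoint C, D.  The rank function of M'/C\D on a subset X of
   E(M') - (C u D) is r_{M'}(X u C) - r_{M'}(C). *)
Definition has_minor (M' N : matroid) : Prop :=
  exists C D : {set T},
    [/\ [disjoint C & D], C :|: D \subset ground M',
        ground N = ground M' :\: (C :|: D) &
        forall X : {set T}, X \subset ground N -> rk N X = rk M' (X :|: C) - rk M' C].

Definition conn (M : matroid) (X : {set T}) : nat :=
  rk M X + rk M (ground M :\: X) - mrank M.

(* Tutte: M is 3-connected iff it has no k-separation for k < 3, a
   k-separation being a partition (X, E - X) with |X|, |E - X| >= k and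
   lambda(X) < k. *)
Definition three_connected (M : matroid) : Prop :=
  forall (k : nat) (X : {set T}), 0 < k < 3 -> X \subset ground M ->
    k <= #|X| -> k <= #|ground M :\: X| -> k <= conn M X.

Definition is_tangle (M : matroid) (theta : nat) (Tg : {set {set T}}) : Prop :=
  [/\ (forall X : {set T}, X \in Tg -> X \subset ground M /\ conn M X < theta),
      (forall X : {set T}, X \subset ground M -> conn M X < theta ->
          X \in Tg \/ ground M :\: X \in Tg),
      (forall X Y Z : {set T}, X \in Tg -> Y \in Tg -> Z \in Tg ->
          X :|: Y :|: Z <> ground M) &
      (forall e, e \in ground M -> ground M :\: [set e] \notin Tg)].

(* rank function of the tangle matroid M(Tg) (ground set E(M)):
   min { lambda(Y) : X <= Y in Tg } if some member contains X, else theta.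
   (Members have lambda < theta, so using theta as the neutral element of the
   minimum is exact.) *)
Definition tangle_rk (M : matroid) (theta : nat) (Tg : {set {set T}})
    (X : {set T}) : nat :=
  \big[minn/theta]_(Y in Tg | X \subset Y) conn M Y.

Definition closed_in (E : {set T}) (r : {set T} -> nat) (X : {set T}) : Prop :=
  X \subset E /\ forall e, e \in E :\: X -> r X < r (e |: X).

Definition long_line (E : {set T}) (r : {set T} -> nat) (X : {set T}) : Prop :=
  [/\ closed_in E r X, r X = 2 & 3 <= #|X|].

(* triangle: 3-element set X with M|X isomorphic to U_{2,3}, i.e. of rank 2
   with all 2-element subsets independent *)
Definition triangle_in (E : {set T}) (r : {set T} -> nat) (X : {set T}) : Prop :=
  [/\ X \subset E, #|X| = 3, r X = 2 &
      forall Y : {set T}, Y \subset X -> #|Y| = 2 -> r Y = 2].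

Definition triangle (M : matroid) (X : {set T}) : Prop :=
  triangle_in (ground M) (rk M) X.

Definition dual_rk (M : matroid) (X : {set T}) : nat :=
  #|X| + rk M (ground M :\: X) - mrank M.

Definition triad (M : matroid) (X : {set T}) : Prop :=
  triangle_in (ground M) (dual_rk M) X.

(* the triple {x_{i+1}, x_{i+2}, x_{i+3}} (0-based: positions i, i+1, i+2) *)
Definition triple (s : seq T) (i : nat) : {set T} :=
  [set x in take 3 (drop i s)].

Definition is_fan (M : matroid) (s : seq T) : Prop :=
  [/\ uniq s, {subset s <= ground M}, 3 <= size s,
      triangle M (triple s 0) \/ triad M (triple s 0) &
      forall i, i + 3 < size s ->
        (triangle M (triple s i) -> triad M (triple s i.+1)) /\
        (triad M (triple s i) -> triangle M (triple s i.+1))].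

Definition maximal_fan (M : matroid) (s : seq T) : Prop :=
  is_fan M s /\
  forall s', is_fan M s' -> {subset s <= s'} -> {subset s' <= s}.

End Matroids.

(* Main.v *)
Require Import Defs.
From mathcomp Require Import all_boot zify.
Set Implicit Arguments. Unset Strict Implicit. Unset Printing Implicit Defensive.

Lemma rk0 (T : finType) (M : matroid T) : rk M set0 = 0.
Proof. by have := rk_card (sub0set (ground M)); rewrite cards0 leqn0 => /eqP. Qed.

Lemma rk_union_le (T : finType) (M : matroid T) (X Z : {set T}) :
  X \subset ground M -> Z \subset ground M -> rk M (X :|: Z) <= rk M X + #|Z|.
Proof.
move=> hX hZ; have := rk_submod hX hZ; have := rk_card hZ; lia.
Qed.

Lemma rk_compl (T : finType) (M : matroid T) (X : {set T}) :
  X \subset ground M -> mrank M <= rk M X + rk M (ground M :\: X).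
Proof.
move=> hX; have := rk_submod hX (subsetDl (ground M) X).
have -> : X :|: ground M :\: X = ground M.
  apply/setP=> x; rewrite !inE; case hx: (x \in X) => //=.
  by rewrite (subsetP hX _ hx).
have -> : X :&: (ground M :\: X) = set0.
  by apply/setP=> x; rewrite !inE; case: (x \in X); rewrite ?andbF.
rewrite rk0 /mrank; lia.
Qed.

Lemma rk_le_mrank (T : finType) (M : matroid T) (X : {set T}) :
  X \subset ground M -> rk M X <= mrank M.
Proof. by move=> hX; apply: rk_mono. Qed.

Lemma conn_le_rk (T : finType) (M : matroid T) (X : {set T}) :
  X \subset ground M -> conn M X <= rk M X.
Proof.
move=> hX; rewrite /conn; have := rk_le_mrank (subsetDl (ground M) X); lia.
Qed.

Lemma compl_compl (T : finType) (E X : {set T}) : X \subset E -> E :\: (E :\: X) = X.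
Proof.
move=> hX; apply/setP=> x; rewrite !inE; case hx: (x \in X); rewrite ?andbF ?andbT //=.
  by rewrite (subsetP hX _ hx).
by case: (x \in E).
Qed.

Lemma conn_sym (T : finType) (M : matroid T) (X : {set T}) :
  X \subset ground M -> conn M (ground M :\: X) = conn M X.
Proof. by move=> hX; rewrite /conn compl_compl // addnC. Qed.

Lemma conn_submod (T : finType) (M : matroid T) (U V : {set T}) :
  U \subset ground M -> V \subset ground M ->
  conn M (U :|: V) + conn M (U :&: V) <= conn M U + conn M V.
Proof.
move=> hU hV; rewrite /conn.
have hUV : U :|: V \subset ground M by rewrite subUset hU hV.
have hIV : U :&: V \subset ground M by apply: subset_trans (subsetIl _ _) hU.
have h1 := rk_submod hU hV.
have h2 := rk_submod (subsetDl (ground M) U) (subsetDl (ground M) V).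
rewrite -setDIr -setDUr in h2.
have := rk_compl hUV; have := rk_compl hIV; have := rk_compl hU; have := rk_compl hV.
lia.
Qed.

Lemma rk_add_cl (T : finType) (M : matroid T) (S U : {set T}) (z : T) :
  S \subset U -> U \subset ground M -> z \in ground M ->
  rk M (z |: S) = rk M S -> rk M (z |: U) = rk M U.
Proof.
move=> hSU hU hz hS.
have hzS : z |: S \subset ground M by rewrite subUset sub1set hz (subset_trans hSU hU).
have := rk_submod hzS hU.
have -> : (z |: S) :|: U = z |: U.
  apply/setP=> x; rewrite !inE; case: (x == z) => //=; case hx: (x \in S) => //=.
  by rewrite (subsetP hSU _ hx).
have hm : rk M S <= rk M ((z |: S) :&: U).
  apply: rk_mono; last by apply: subset_trans (subsetIr _ _) hU.
  by rewrite subsetI subsetUr hSU.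
have hm2 : rk M U <= rk M (z |: U).
  by apply: rk_mono; [apply: subsetUr | rewrite subUset sub1set hz hU].
lia.
Qed.

Lemma rk_cl_set (T : finType) (M : matroid T) (U Z : {set T}) :
  U \subset ground M -> Z \subset ground M ->
  (forall z, z \in Z -> rk M (z |: U) = rk M U) -> rk M (U :|: Z) = rk M U.
Proof.
move=> hU hZ hcl; rewrite -(set_enum Z).
have : forall z, z \in enum Z -> z \in Z by move=> z; rewrite mem_enum.
elim: (enum Z) => [|z s IH] hs; first by rewrite set_nil setU0.
rewrite set_cons.
have hzZ : z \in Z by apply: hs; rewrite inE eqxx.
have -> : U :|: (z |: [set:: s]) = z |: (U :|: [set:: s]).
  by rewrite setUCA.
have hsub : [set:: s] \subset ground M.
  apply/subsetP=> x; rewrite inE => hx; apply: (subsetP hZ); apply: hs; by rewrite inE hx orbT.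
rewrite (@rk_add_cl _ M U (U :|: [set:: s]) z) ?subsetUl ?subUset ?hU ?hsub ?hcl //.
- by apply: IH => x hx; apply: hs; rewrite inE hx orbT.
- exact: (subsetP hZ).
Qed.

Lemma rk_indep_add (T : finType) (M : matroid T) (W H : {set T}) (x : T) :
  W \subset H -> H \subset ground M -> x \in ground M ->
  rk M H < rk M (x |: H) -> rk M (x |: W) = (rk M W).+1.
Proof.
move=> hWH hH hx hlt.
have hW : W \subset ground M by apply: subset_trans hWH hH.
have h1 := rk_union_le hW (_ : [set x] \subset ground M).
rewrite sub1set cards1 setUC in h1; have {h1} h1 := h1 hx.
have h2 : rk M W <= rk M (x |: W) by apply: rk_mono; [apply: subsetUr | rewrite subUset sub1set hx hW].
case: (ltngtP (rk M (x |: W)) (rk M W)) => h; [lia | lia |].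
have := @rk_add_cl _ M W H x hWH hH hx h; lia.
Qed.
Lemma conn_del_le (T : finType) (M : matroid T) (D A : {set T}) :
  D \subset ground M -> A \subset ground M :\: D ->
  conn M A <= conn (mdel M D) A + #|D|.
Proof.
move=> hD hA; rewrite /conn /mrank /=.
have hE : ground M :\: D \subset ground M by apply: subsetDl.
have hA' : A \subset ground M by apply: subset_trans hA hE.
have hB : ground M :\: D :\: A \subset ground M by apply: subset_trans (subsetDl _ _) hE.
have -> : ground M :\: A = (ground M :\: D :\: A) :|: D.
  apply/setP=> x; rewrite !inE.
  case hxD: (x \in D); rewrite /= ?orbT ?andbF //=.
    rewrite (subsetP hD _ hxD) andbT; apply/negP=> hxA.
    by have := subsetP hA _ hxA; rewrite !inE hxD.
  by rewrite orbF.
have h1 := rk_union_le hB hD.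
have h2 : rk M (ground M :\: D) <= rk M (ground M) by apply: rk_mono.
have h3 := @rk_compl _ (mdel M D) A hA. rewrite /mrank /= in h3.
lia.
Qed.

Lemma tc_ge (T : finType) (M : matroid T) (k : nat) (Z : {set T}) :
  three_connected M -> 0 < k < 3 -> Z \subset ground M -> k <= #|Z| ->
  k <= #|ground M :\: Z| -> k <= conn M Z.
Proof. by move=> h; apply: h. Qed.

Lemma tc_del0 (T : finType) (M : matroid T) :
  three_connected M -> three_connected (mdel M set0).
Proof.
move=> h k Z hk; rewrite /conn /mrank /= setD0; exact: h.
Qed.

Lemma tg_sub (T : finType) (M : matroid T) theta (Tg : {set {set T}}) (Y : {set T}) :
  is_tangle M theta Tg -> Y \in Tg -> Y \subset ground M.
Proof. by case=> h _ _ _ hY; case: (h Y hY). Qed.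

Lemma tg_conn (T : finType) (M : matroid T) theta (Tg : {set {set T}}) (Y : {set T}) :
  is_tangle M theta Tg -> Y \in Tg -> conn M Y < theta.
Proof. by case=> h _ _ _ hY; case: (h Y hY). Qed.

Lemma tg_card (T : finType) (M : matroid T) theta (Tg : {set {set T}}) (Y : {set T}) :
  is_tangle M theta Tg -> Y \in Tg -> 2 <= #|ground M :\: Y|.
Proof.
move=> htg hY; have hs := tg_sub htg hY; case: htg => _ _ h3 h4.
case: (ltnP #|ground M :\: Y| 2) => // hc.
exfalso; move: hc; rewrite ltnS leq_eqVlt ltnS leqn0; case/orP.
- case/cards1P=> x hx.
  have hxE : x \in ground M.
    have : x \in ground M :\: Y by rewrite hx inE.
    by rewrite inE => /andP[].
  have : ground M :\: [set x] = Y by rewrite -hx compl_compl.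
  by move=> eY; move: (h4 x hxE); rewrite eY hY.
- rewrite cards_eq0 setD_eq0 => hEY.
  have eY : Y = ground M by apply/eqP; rewrite eqEsubset hs hEY.
  by apply: (h3 Y Y Y hY hY hY); rewrite !setUid.
Qed.

Lemma tg_union (T : finType) (M : matroid T) theta (Tg : {set {set T}}) (U V : {set T}) :
  is_tangle M theta Tg -> U \in Tg -> V \in Tg -> conn M (U :|: V) < theta ->
  U :|: V \in Tg.
Proof.
move=> htg hU hV hc.
have hUV : U :|: V \subset ground M by rewrite subUset (tg_sub htg hU) (tg_sub htg hV).
case: htg => _ h2 h3 _.
case: (h2 _ hUV hc) => // hW; exfalso.
apply: (h3 U V _ hU hV hW).
apply/setP=> x; rewrite !inE; case hxU: (x \in U) => /=.
  by rewrite (subsetP hUV) // inE hxU.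
case hxV: (x \in V) => /=; first by rewrite (subsetP hUV) // inE hxV orbT.
by case: (x \in ground M).
Qed.

Lemma tg_mem (T : finType) (M : matroid T) theta (Tg : {set {set T}}) (Z : {set T}) :
  is_tangle M theta Tg -> Z \subset ground M -> conn M Z < theta ->
  Z \in Tg \/ ground M :\: Z \in Tg.
Proof. by case=> _ h2 _ _; apply: h2. Qed.

Lemma trk_le (T : finType) (M : matroid T) theta (Tg : {set {set T}}) (Z Y : {set T}) :
  Y \in Tg -> Z \subset Y -> tangle_rk M theta Tg Z <= conn M Y.
Proof.
move=> hY hZ; rewrite /tangle_rk.
have : Y \in index_enum {set T} by rewrite mem_index_enum.
elim: (index_enum _) => [|y s IH] //; rewrite inE big_cons.
case/orP=> [/eqP <-|hs].
  by rewrite hY hZ; exact: geq_minl.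
case: ifP => _; last exact: IH.
by rewrite geq_min IH ?orbT.
Qed.

Lemma trk_le_theta (T : finType) (M : matroid T) theta (Tg : {set {set T}}) (Z : {set T}) :
  tangle_rk M theta Tg Z <= theta.
Proof.
rewrite /tangle_rk; elim: (index_enum _) => [|y s IH]; first by rewrite big_nil.
rewrite big_cons; case: ifP => _ //; by rewrite geq_min IH orbT.
Qed.

Lemma trk_ex (T : finType) (M : matroid T) theta (Tg : {set {set T}}) (Z : {set T}) :
  tangle_rk M theta Tg Z < theta ->
  exists Y, [/\ Y \in Tg, Z \subset Y & conn M Y <= tangle_rk M theta Tg Z].
Proof.
move=> hlt; set k := tangle_rk M theta Tg Z.
case: (boolP [exists Y, [&& Y \in Tg, Z \subset Y & conn M Y <= k]]).
  by case/existsP=> Y /and3P[h1 h2 h3]; exists Y.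
rewrite negb_exists => /forallP hn; exfalso.
have : k < k.
  rewrite {2}/k /tangle_rk; apply: (big_ind (fun x => k < x)) => //.
  - by move=> x y hx hy; rewrite leq_min hx.
  - move=> Y /andP[hY hZ]; have := hn Y; rewrite hY hZ /= -ltnNge //.
by rewrite ltnn.
Qed.

Lemma grow (T : finType) (M : matroid T) theta (Tg : {set {set T}}) (r : nat)
  (Y : 'I_r -> {set T}) (U : {set T}) (good : pred 'I_r) :
  is_tangle M theta Tg -> three_connected M -> U \in Tg ->
  (forall i, Y i \in Tg) -> (forall i, conn M (Y i) <= 2) ->
  (forall i, good i -> 2 <= #|U :&: Y i|) ->
  forall s : seq 'I_r, conn M U + 2 * count (predC good) s < theta ->
   (U :|: \bigcup_(i <- s) Y i) \in Tg /\
   conn M (U :|: \bigcup_(i <- s) Y i) <= conn M U + 2 * count (predC good) s.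
Proof.
move=> htg h3 hU hY hY2 hgood; elim=> [|x s IH] hlt.
  by rewrite big_nil setU0 hU leq_addr.
rewrite big_cons /=.
have [IH1 IH2] : (U :|: \bigcup_(i <- s) Y i) \in Tg /\
   conn M (U :|: \bigcup_(i <- s) Y i) <= conn M U + 2 * count (predC good) s.
  by apply: IH; move: hlt; case: (predC good x) => /=; lia.
set W := U :|: \bigcup_(i <- s) Y i in IH1 IH2 *.
have -> : U :|: (Y x :|: \bigcup_(i <- s) Y i) = W :|: Y x.
  by rewrite /W setUCA setUC.
have hWs := tg_sub htg IH1; have hYs := tg_sub htg (hY x).
have hsub := conn_submod hWs hYs.
have hb : conn M (W :|: Y x) <= conn M U + 2 * count (predC good) (x :: s).
  rewrite /=; case hg: (good x) => /=.
  - have h2 : 2 <= conn M (W :&: Y x).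
      apply: (tc_ge h3) => //.
      + by apply: subset_trans (subsetIl _ _) hWs.
      + apply: leq_trans (hgood x hg) _; apply: subset_leq_card.
        by apply: setSI; apply: subsetUl.
      + apply: leq_trans (tg_card htg (hY x)) _; apply: subset_leq_card.
        by apply: setDS; apply: subsetIr.
    have := hY2 x; lia.
  - have := hY2 x; lia.
split=> //; apply: (tg_union htg) => //; move: hb hlt; lia.
Qed.

Lemma cnt (r : nat) (a : pred 'I_r) : count a (index_enum 'I_r) = #|a|.
Proof. rewrite cardE /enum_mem size_filter /index_enum; by rewrite unlock. Qed.
Lemma cnt2 (r : nat) (a : pred 'I_r) : count a (index_enum 'I_r) + count (predC a) (index_enum 'I_r) = r.
Proof. by rewrite count_predC -count_predT cnt card_ord. Qed.

Lemma final_contra (T : finType) (M : matroid T) theta (Tg : {set {set T}}) (r : nat)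
  (X Y : 'I_r -> {set T}) (U : {set T}) (P : {set 'I_r}) :
  is_tangle M theta Tg -> three_connected M ->
  (forall i, Y i \in Tg) -> (forall i, conn M (Y i) <= 2) -> (forall i, X i \subset Y i) ->
  tangle_rk M theta Tg (\bigcup_(i < r) X i) = 2 * r -> 2 * r <= theta -> U \in Tg ->
  (forall p, p \in P -> 2 <= #|U :&: Y p|) -> conn M U + 2 * (r - #|P|) < 2 * r -> False.
Proof.
move=> htg h3 hY hY2 hXY hrk hth hU hP hlt.
pose good := [pred i | 2 <= #|U :&: Y i|].
have hPg : #|P| <= count good (index_enum 'I_r).
  rewrite cnt; apply: subset_leq_card; apply/subsetP=> i hi; rewrite inE; exact: hP.
have hc := cnt2 good.
have [hW1 hW2] := @grow T M theta Tg r Y U good htg h3 hU hY hY2 (fun i hi => hi)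
  (index_enum 'I_r) ltac:(lia).
have : 2 * r <= conn M (U :|: \bigcup_(i <- index_enum 'I_r) Y i).
  rewrite -hrk; apply: trk_le => //.
  apply/subsetP=> x /bigcupP[i _ hx]; rewrite inE; apply/orP; right.
  by apply/bigcupP; exists i => //; exact: (subsetP (hXY i)).
move=> hfin; have := leq_trans hfin hW2; lia.
Qed.

Lemma two_card (T : finType) (S : {set T}) x y :
  x \in S -> y \in S -> x != y -> 2 <= #|S|.
Proof.
move=> hx hy hxy; have h := cards2 x y; rewrite hxy in h; rewrite -h; apply: subset_leq_card.
by apply/subsetP=> z; rewrite !inE => /orP[] /eqP ->.
Qed.

Lemma key_contra (T : finType) (M : matroid T) theta (Tg : {set {set T}}) (r : nat)
  (X Y : 'I_r -> {set T}) (e : 'I_r -> T) (P : {set 'I_r}) (A B : {set T}) :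
  is_tangle M theta Tg -> three_connected M ->
  (forall i, Y i \in Tg) -> (forall i, conn M (Y i) <= 2) -> (forall i, X i \subset Y i) ->
  tangle_rk M theta Tg (\bigcup_(i < r) X i) = 2 * r -> 2 * r <= theta ->
  (forall i, e i \in X i) ->
  2 <= #|P| -> A :&: B = set0 -> A :|: B = ground M :\: [set e p | p in P] ->
  conn M A <= #|P|.+1 -> conn M B <= #|P|.+1 ->
  (forall p, p \in P -> exists x y, [/\ x \in A, x \in X p, y \in B & y \in X p]) -> False.
Proof.
move=> htg h3 hY hY2 hXY hrk hth he hP2 hAB hAuB hcA hcB hst.
have hPr : #|P| <= r by have := max_card P; rewrite card_ord.
set EP := [set e p | p in P] in hAuB.
have hXE : forall i, X i \subset ground M.
  by move=> i; apply: subset_trans (hXY i) (tg_sub htg (hY i)).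
have hEP : EP \subset ground M.
  by apply/subsetP=> x /imsetP[p _ ->]; apply: (subsetP (hXE p)).
have hAE : A \subset ground M.
  by apply: subset_trans (subsetDl _ EP); rewrite -hAuB subsetUl.
have hBE : B \subset ground M.
  by apply: subset_trans (subsetDl _ EP); rewrite -hAuB subsetUr.
have hcEP : conn M EP <= #|P|.
  apply: leq_trans (conn_le_rk hEP) _; apply: leq_trans (rk_card hEP) _.
  exact: leq_imset_card.
have hAnot : forall x, x \in A -> x \notin EP.
  move=> x hx; have : x \in A :|: B by rewrite inE hx.
  by rewrite hAuB inE => /andP[].
have hneq : forall x y, x \in A -> y \in B -> x != y.
  move=> x y hx hy; apply/eqP=> exy; subst y.
  have : x \in A :&: B by rewrite inE hx hy.
  by rewrite hAB inE.
have hePin : forall p, p \in P -> e p \in EP by move=> p hp; apply: imset_f.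
have hr2 : 2 <= r by lia.
have hltE : conn M EP < theta by lia.
case: (tg_mem htg hEP hltE); last first.
- move=> hc; apply: (@final_contra T M theta Tg r X Y _ P htg h3 hY hY2 hXY hrk hth hc).
  + move=> p hp; case: (hst p hp) => x [y [hxA hxX hyB hyX]].
    apply: (@two_card _ _ x y); last exact: hneq.
    * rewrite inE (subsetP (hXY p) _ hxX) andbT inE (subsetP hAE _ hxA) andbT.
      exact: hAnot.
    * rewrite inE (subsetP (hXY p) _ hyX) andbT.
      have : y \in A :|: B by rewrite inE hyB orbT.
      by rewrite hAuB.
  + rewrite conn_sym //; lia.
move=> hEPT.
have side : forall (A' B' : {set T}), A' :&: B' = set0 -> A' :|: B' = ground M :\: EP ->
    A' \subset ground M -> conn M A' <= #|P|.+1 ->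
    (forall p, p \in P -> exists y, y \in B' /\ y \in X p) -> A' \in Tg.
  move=> A' B' hAB' hAuB' hA'E hcA' hst'.
  have hltA : conn M A' < theta by lia.
  case: (tg_mem htg hA'E hltA) => // hc; exfalso.
  apply: (@final_contra T M theta Tg r X Y _ P htg h3 hY hY2 hXY hrk hth hc).
  + move=> p hp; case: (hst' p hp) => y [hyB hyX].
    have hyn : y \notin EP.
      have : y \in A' :|: B' by rewrite inE hyB orbT.
      by rewrite hAuB' inE => /andP[].
    apply: (@two_card _ _ (e p) y).
    * rewrite inE (subsetP (hXY p) _ (he p)) andbT inE (subsetP hEP _ (hePin p hp)) andbT.
      apply/negP=> hA'; have : e p \in A' :|: B' by rewrite inE hA'.
      by rewrite hAuB' inE hePin.
    * rewrite inE (subsetP (hXY p) _ hyX) andbT inE.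
      have : y \in A' :|: B' by rewrite inE hyB orbT.
      rewrite hAuB' inE => /andP[_ ->]; rewrite andbT.
      apply/negP=> hyA; have : y \in A' :&: B' by rewrite inE hyA hyB.
      by rewrite hAB' inE.
    * by apply/eqP=> eq; rewrite -eq (hePin p hp) in hyn.
  + rewrite conn_sym //; lia.
have hAT : A \in Tg.
  apply: (side A B) => // p hp; case: (hst p hp) => x [y [_ _ hyB hyX]]; by exists y.
have hBT : B \in Tg.
  apply: (side B A) => //; first by rewrite setIC.
  - by rewrite setUC.
  - move=> p hp; case: (hst p hp) => x [y [hxA hxX _ _]]; by exists x.
case: htg => _ _ h3t _; apply: (h3t A B EP hAT hBT hEPT).
apply/setP=> x; rewrite !inE -(in_setU x A B) hAuB !inE.
case hx: (x \in EP) => /=; last by rewrite orbF.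
by rewrite (subsetP hEP _ hx).
Qed.

Lemma triple_nth (T : finType) (s : seq T) (i : nat) (x0 : T) : i + 3 <= size s ->
  triple s i = [set nth x0 s i; nth x0 s i.+1; nth x0 s i.+2].
Proof.
move=> hi; rewrite /triple (drop_nth x0) ?(drop_nth x0 (n := i.+1)) ?(drop_nth x0 (n := i.+2)); try lia.
apply/setP=> z; rewrite /= !inE take0 in_nil orbF; by case: (z == _); case: (z == _).
Qed.

Lemma fan_tri (T : finType) (M : matroid T) (s : seq T) : is_fan M s ->
  forall i, i + 3 <= size s -> triangle M (triple s i) \/ triad M (triple s i).
Proof.
case=> _ _ _ h0 halt; elim=> [|i IH] hi //.
have [h1 h2] := halt i ltac:(lia).
by case: (IH ltac:(lia)) => h; [right; apply: h1 | left; apply: h2].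
Qed.

Lemma fan_end (T : finType) (M : matroid T) (s : seq T) (x : T) :
  is_fan M s -> 4 <= size s -> x \in s -> (forall Tr, triad M Tr -> x \notin Tr) ->
  exists a b c, [/\ triangle M [set x; a; b], triad M [set a; b; c],
     uniq [:: x; a; b; c] & [/\ a \in s, b \in s & c \in s]].
Proof.
move=> hf hn hx hnt.
have hf' := hf; case: hf' => hu _ _ _ halt.
set n := size s in hn halt.
set m := index x s.
have hm : m < n by rewrite /m index_mem.
have hxm : nth x s m = x by rewrite nth_index.
have hin : forall i j, i + 3 <= n -> i <= j <= i + 2 -> nth x s j \in triple s i.
  move=> i j hi hj; rewrite (triple_nth x hi) !inE.
  have : (j == i) || (j == i.+1) || (j == i.+2) by lia.
  by case/orP=> [/orP[]|] /eqP ->; rewrite eqxx ?orbT.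
have hnth : forall j, j < n -> nth x s j \in s by move=> j hj; apply: mem_nth.
have huq : forall j k, j < n -> k < n -> j != k -> nth x s j != nth x s k.
  by move=> j k hj hk; rewrite nth_uniq.
have hx' : forall k, k < n -> k != m -> x != nth x s k.
  by move=> k hk hkm; rewrite -{1}hxm huq // eq_sym.
have notri : forall i, i + 3 <= n -> i <= m <= i + 2 -> triangle M (triple s i).
  move=> i hi him; case: (fan_tri hf hi) => // htd.
  by have := hnt _ htd; rewrite -hxm hin.
case: (ltnP 0 m) => hm0.
- case: (ltnP m n.-1) => hm1.
  + exfalso; case: (leqP (m + 3) n) => hm3.
    * have t1 := notri m.-1 ltac:(lia) ltac:(lia).
      have t2 := (halt m.-1 ltac:(lia)).1 t1.
      rewrite (_ : m.-1.+1 = m) in t2; last by lia.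
      by have := hnt _ t2; rewrite -hxm hin //; lia.
    * have t1 := notri m.-2 ltac:(lia) ltac:(lia).
      have t2 := (halt m.-2 ltac:(lia)).1 t1.
      rewrite (_ : m.-2.+1 = m.-1) in t2; last by lia.
      by have := hnt _ t2; rewrite -hxm hin //; lia.
  +
    have emn : m = n.-1 by move: hm; lia.
    have t1 := notri (n - 3) ltac:(lia) ltac:(lia).
    have t0 : triad M (triple s (n - 4)).
      case: (fan_tri hf (_ : n - 4 + 3 <= n)) => //; first by lia.
      move=> htr; have t2 := (halt (n - 4) ltac:(lia)).1 htr.
      rewrite (_ : (n - 4).+1 = n - 3) in t2; last by lia.
      by have := hnt _ t2; rewrite -hxm hin //; lia.
    exists (nth x s (n - 3)), (nth x s (n - 2)), (nth x s (n - 4)).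
    rewrite (triple_nth x (_ : n - 3 + 3 <= n)) in t1; last by lia.
    rewrite (triple_nth x (_ : n - 4 + 3 <= n)) in t0; last by lia.
    rewrite (_ : (n - 3).+2 = m) in t1; last by lia.
    rewrite hxm in t1.
    rewrite (_ : (n - 3).+1 = n - 2) in t1; last by lia.
    rewrite (_ : (n - 4).+2 = n - 2) in t0; last by lia.
    rewrite (_ : (n - 4).+1 = n - 3) in t0; last by lia.
    split.
    * move: t1; congr triangle; apply/setP=> z; rewrite !inE.
      by case: (z == x); case: (z == nth x s (n - 3)); case: (z == nth x s (n-2)).
    * move: t0; congr triad; apply/setP=> z; rewrite !inE.
      by case: (z == nth x s (n - 4)); case: (z == nth x s (n - 3)); case: (z == nth x s (n-2)).
    * rewrite /= !inE !negb_or !hx' ?huq //=; lia.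
    * by split; apply: hnth; lia.
-
  have em : m = 0 by lia.
  have t1 := notri 0 ltac:(lia) ltac:(lia).
  have t2 := (halt 0 ltac:(lia)).1 t1.
  exists (nth x s 1), (nth x s 2), (nth x s 3).
  rewrite (triple_nth x (_ : 0 + 3 <= n)) in t1; last by lia.
  rewrite (triple_nth x (_ : 1 + 3 <= n)) in t2; last by lia.
  rewrite (_ : nth x s 0 = x) in t1; last by rewrite -em.
  split => //.
  * rewrite /= !inE !negb_or !hx' ?huq //=; lia.
  * by split; apply: hnth; lia.
Qed.

Lemma triad_del (T : finType) (M : matroid T) (Tr : {set T}) (x : T) :
  triad M Tr -> x \in Tr -> 5 <= #|ground M| -> ~ three_connected (mdel M [set x]).
Proof.
case=> hTE hT3 hTd hT2 hx hE h3.
set Z := Tr :\ x.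
have hZ2 : #|Z| = 2 by have := cardsD1 x Tr; rewrite hx hT3 /Z; lia.
have hxE : x \in ground M by apply: (subsetP hTE).
have [y hy] : exists y, y \in Z.
  by apply/set0Pn; rewrite -card_gt0 hZ2.
have hyT : y \in Tr by move: hy; rewrite inE => /andP[].
have hyx : y != x by move: hy; rewrite !inE => /andP[].
have hYd := hT2 [set x; y] (_ : _) (_ : _).
have h1 : [set x; y] \subset Tr by apply/subsetP=> z; rewrite !inE => /orP[] /eqP ->.
have h2 : #|[set x; y]| = 2 by rewrite cards2 eq_sym hyx.
have {}hYd := hYd h1 h2.
rewrite /dual_rk h2 in hYd.
have hmono1 : rk M (ground M :\: [set x; y]) <= rk M (ground M :\: [set x]).
  apply: rk_mono; last exact: subsetDl.
  by apply: setDS; apply/subsetP=> z; rewrite !inE => /eqP ->; rewrite eqxx.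
have hmono2 : rk M (ground M :\: [set x]) <= mrank M by apply: rk_le_mrank; exact: subsetDl.
rewrite /dual_rk hT3 in hTd.
have hmono3 : rk M (ground M :\: Tr) <= mrank M by apply: rk_le_mrank; exact: subsetDl.
have hZE : Z \subset ground M :\: [set x].
  apply/subsetP=> z; rewrite !inE => /andP[-> hz]; by rewrite (subsetP hTE).
have eR : (ground M :\: [set x]) :\: Z = ground M :\: Tr.
  apply/setP=> z; rewrite !inE; case: (eqVneq z x) => [->|hzx] /=.
    by rewrite hx.
  by case: (z \in Tr); case: (z \in ground M).
have hcard : 2 <= #|(ground M :\: [set x]) :\: Z|.
  rewrite eR cardsD (setIidPr hTE) hT3; lia.
have hZ2' : 2 <= #|Z| by rewrite hZ2.
have hc := h3 2 Z isT hZE hZ2' hcard.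
have hZrk : rk M Z <= 2 by rewrite -hZ2; apply: rk_card; apply: subset_trans hZE (subsetDl _ _).
move: hc; rewrite /conn /mrank /= eR.
lia.
Qed.

Definition minor_data (T : finType) (M N : matroid T) (C D : {set T}) : Prop :=
  [/\ [disjoint C & D], C :|: D \subset ground M, ground N = ground M :\: (C :|: D) &
      forall X : {set T}, X \subset ground N -> rk N X = rk M (X :|: C) - rk M C].

Lemma md_transfer (T : finType) (M N : matroid T) (C D C' D' : {set T}) (k : nat) :
  minor_data M N C D -> [disjoint C' & D'] -> C' :|: D' = C :|: D ->
  (forall W : {set T}, W \subset ground N -> rk M (W :|: C') = rk M (W :|: C) + k) ->
  minor_data M N C' D'.
Proof.
case=> h1 h2 h3 h4 hd hU hW; split=> //; rewrite ?hU //.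
move=> X hX; rewrite h4 // (hW X hX).
have := hW set0 (sub0set _); rewrite !set0U => ->; lia.
Qed.

Lemma tri_cl (T : finType) (M : matroid T) (p q z : T) (U : {set T}) :
  rk M [set p; q] = 2 -> rk M [set z; p; q] = 2 -> p \in U -> q \in U ->
  U \subset ground M -> z \in ground M -> rk M (z |: U) = rk M U.
Proof.
move=> h1 h2 hp hq hU hz; apply: (@rk_add_cl _ M [set p; q]) => //.
  by apply/subsetP=> y; rewrite !inE => /orP[] /eqP ->.
have -> : z |: [set p; q] = [set z; p; q] by rewrite setUA.
by rewrite h1 h2.
Qed.



Ltac bsimp := repeat match goal with
  | H : is_true ?x |- context [?x] => rewrite H
  | H : ?x = false |- context [?x] => rewrite H
  | H : is_true (~~ ?x) |- context [?x] => rewrite (negbTE H)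
  | H : ?x = true |- context [?x] => rewrite H
  end.
Ltac memt := rewrite !inE ?eqxx; bsimp; rewrite /= ?orbT ?andbT //.

Lemma ar1 x y : 2 + x - y = 2 -> y <= x. Proof. lia. Qed.
Lemma ar2 x y : 3 + x - y = 2 -> x <= y -> x.+1 = y. Proof. lia. Qed.

Ltac fin := rewrite /=; repeat (match goal with |- context [?x \in ?S] => case: (x \in S) => //= end).

Ltac finC C hCD := rewrite /=; repeat (match goal with |- context [?x \in ?S] =>
   let hh := fresh "hh" in case hh: (x \in S) => //= end);
   try (match goal with H1 : (?x \in _) = true |- _ => have := hCD x H1; congruence end).

Lemma subD (T : finType) (G A B : {set T}) : A \subset G -> A :\: B \subset G.
Proof. by move=> h; apply: subset_trans h; apply: subsetDl. Qed.
Lemma subU1 (T : finType) (G A : {set T}) x : x \in G -> A \subset G -> x |: A \subset G.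
Proof. by move=> hx h; rewrite subUset sub1set hx h. Qed.
Lemma subU (T : finType) (G A B : {set T}) : A \subset G -> B \subset G -> A :|: B \subset G.
Proof. by move=> h1 h2; rewrite subUset h1 h2. Qed.
Ltac subE := repeat first [apply: subU1 | apply: subU | apply: subD | assumption].

Ltac spl z e a b c := case: (eqVneq z e) => [->|?]; [|case: (eqVneq z a) => [->|?];
  [|case: (eqVneq z b) => [->|?]; [|case: (eqVneq z c) => [->|?]]]].

Lemma swap (T : finType) (M N : matroid T) (C D : {set T}) (e a b c : T) :
  minor_data M N C D -> uniq [:: e; a; b; c] ->
  [/\ e \in ground M, a \in ground M, b \in ground M & c \in ground M] ->
  [/\ e \notin ground N, a \notin ground N, b \notin ground N & c \notin ground N] ->
  triangle M [set e; a; b] -> triad M [set a; b; c] ->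
  exists C' D', [/\ minor_data M N C' D', e \in D' &
     forall z, z \notin [set e; a; b; c] -> (z \in D') = (z \in D)].
Proof.
move=> md hu [heE haE hbE hcE] [heN haN hbN hcN] htri htd.
have md' := md; case: md' => hdis hCDE hgN hrkN.
have hCD : forall z, z \in C -> (z \in D) = false.
  move=> z hz; apply/negbTE/negP=> hzD; move: hdis; rewrite -setI_eq0 => /eqP hI.
  have : z \in C :&: D by rewrite inE hz hzD.
  by rewrite hI inE.
have hin : forall z, z \in ground M -> z \notin ground N -> (z \in C) || (z \in D).
  move=> z hz hzN; move: hzN; rewrite hgN !inE hz andbT negbK; by [].
have hCE : C \subset ground M by apply: subset_trans (subsetUl C D) hCDE.
have hDE : D \subset ground M by apply: subset_trans (subsetUr C D) hCDE.
have hNE : ground N \subset ground M by rewrite hgN subsetDl.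
have hWn : forall (W : {set T}) (z : T), W \subset ground N -> z \notin ground N -> (z \in W) = false.
  move=> W z hW hz; apply: negbTE; apply/negP=> hzW; move/negP: hz; apply; exact: (subsetP hW).
move: hu; rewrite /= !inE !negb_or => /and4P[/and3P[hea heb hec] /andP[hab hac] hbc _].
have hae : (a == e) = false by rewrite eq_sym; apply/negbTE.
have hbe : (b == e) = false by rewrite eq_sym; apply/negbTE.
have hce : (c == e) = false by rewrite eq_sym; apply/negbTE.
have hba : (b == a) = false by rewrite eq_sym; apply/negbTE.
have hca : (c == a) = false by rewrite eq_sym; apply/negbTE.
have hcb : (c == b) = false by rewrite eq_sym; apply/negbTE.
move/negbTE: hea => hea; move/negbTE: heb => heb; move/negbTE: hec => hec.
move/negbTE: hab => hab; move/negbTE: hac => hac; move/negbTE: hbc => hbc.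
case: htri => hTs hT3 hT2 hTsub.
have r2 : forall p q, p \in [set e; a; b] -> q \in [set e; a; b] -> p != q -> rk M [set p; q] = 2.
  move=> p q hp hq hpq; apply: hTsub; last by rewrite cards2 hpq.
  by apply/subsetP=> y; rewrite in_set2 => /orP[] /eqP ->.
have rab : rk M [set a; b] = 2 by apply: r2; rewrite ?inE ?eqxx ?orbT ?hab.
have rea : rk M [set e; a] = 2 by apply: r2; rewrite ?inE ?eqxx ?orbT ?hea.
have reb : rk M [set e; b] = 2 by apply: r2; rewrite ?inE ?eqxx ?orbT ?heb.
have cle : forall U : {set T}, a \in U -> b \in U -> U \subset ground M -> rk M (e |: U) = rk M U.
  by move=> U h1 h2 hU; apply: tri_cl rab hT2 h1 h2 hU heE.
have clb : forall U : {set T}, e \in U -> a \in U -> U \subset ground M -> rk M (b |: U) = rk M U.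
  move=> U h1 h2 hU; apply: tri_cl rea _ h1 h2 hU hbE; rewrite -hT2; congr (rk M _).
  by apply/setP=> z; rewrite !inE; case: (z == e); case: (z == a); case: (z == b).
have cla : forall U : {set T}, e \in U -> b \in U -> U \subset ground M -> rk M (a |: U) = rk M U.
  move=> U h1 h2 hU; apply: tri_cl reb _ h1 h2 hU haE; rewrite -hT2; congr (rk M _).
  by apply/setP=> z; rewrite !inE; case: (z == e); case: (z == a); case: (z == b).
case: htd => hDs hD3 hDd hDsub.
set H := ground M :\: [set a; b; c].
have hHE : H \subset ground M by apply: subsetDl.
have hdual2 : forall p q, p \in [set a; b; c] -> q \in [set a; b; c] -> p != q ->
    mrank M <= rk M (ground M :\: [set p; q]).
  move=> p q hp hq hpq; have := hDsub [set p; q].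
  rewrite /dual_rk cards2 hpq => h; apply: ar1; apply: h => //.
  by apply/subsetP=> y; rewrite in_set2 => /orP[] /eqP ->.
have ha3 : a \in [set a; b; c] by rewrite !inE eqxx.
have hb3 : b \in [set a; b; c] by rewrite !inE eqxx ?orbT.
have hc3 : c \in [set a; b; c] by rewrite !inE eqxx ?orbT.
have hH : (rk M H).+1 = mrank M.
  move: hDd; rewrite /dual_rk hD3 -/H => h; apply: ar2 h (rk_le_mrank hHE).
have inda : forall W : {set T}, W \subset H -> rk M (a |: W) = (rk M W).+1.
  move=> W hW; apply: (rk_indep_add hW hHE haE).
  have -> : a |: H = ground M :\: [set b; c].
    by apply/setP=> z; rewrite !inE; spl z e a b c; rewrite ?eqxx; bsimp; fin.
  have h := hdual2 b c hb3 hc3 (negbT hbc).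
  rewrite -hH in h; exact: h.
have indc : forall W : {set T}, W \subset H -> rk M (c |: W) = (rk M W).+1.
  move=> W hW; apply: (rk_indep_add hW hHE hcE).
  have -> : c |: H = ground M :\: [set a; b].
    by apply/setP=> z; rewrite !inE; spl z e a b c; rewrite ?eqxx; bsimp; fin.
  have h := hdual2 a b ha3 hb3 (negbT hab).
  rewrite -hH in h; exact: h.
have heCD := hin e heE heN; have haCD := hin a haE haN.
have hbCD := hin b hbE hbN; have hcCD := hin c hcE hcN.
case heD : (e \in D).
  by exists C, D; split.
have heC : e \in C by move: heCD; rewrite heD orbF.
have hWs : forall W : {set T}, W \subset ground N ->
   [/\ W \subset ground M, (e \in W) = false, (a \in W) = false, (b \in W) = false & (c \in W) = false].
  by move=> W hW; split; [exact: subset_trans hW hNE | apply: hWn ..].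
have chain : forall Z : {set T}, Z \subset H ->
    rk M (a |: (b |: Z)) = (rk M (e |: Z)).+1.
  move=> Z hZ; have hZE : Z \subset ground M by apply: subset_trans hZ hHE.
  have heH : e |: Z \subset H.
    rewrite subUset hZ andbT sub1set !inE heE andbT hea heb hec //.
  have s1 : a |: (b |: Z) \subset ground M by subE.
  have m1 : a \in a |: (b |: Z) by rewrite !inE eqxx.
  have m2 : b \in a |: (b |: Z) by rewrite !inE eqxx orbT.
  rewrite -(inda _ heH) -(cle _ m1 m2 s1).
  have -> : e |: (a |: (b |: Z)) = b |: (a |: (e |: Z)).
    by apply/setP=> z; rewrite !inE; spl z e a b c; rewrite ?eqxx; bsimp; fin.
  have s2 : a |: (e |: Z) \subset ground M by subE.
  have m3 : a \in a |: (e |: Z) by rewrite !inE eqxx.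
  have m4 : e \in a |: (e |: Z) by rewrite !inE eqxx orbT.
  by rewrite clb.
case haC : (a \in C); case hbC : (b \in C).
-
  have haD := hCD _ haC; have hbD := hCD _ hbC.
  exists (C :\ e), (e |: D); split.
  + apply: (@md_transfer _ M N C D _ _ 0 md).
    * by rewrite -setI_eq0; apply/eqP/setP=> z; rewrite !inE; spl z e a b c; rewrite ?eqxx; bsimp; finC C hCD.
    * by apply/setP=> z; rewrite !inE; spl z e a b c; rewrite ?eqxx; bsimp; finC C hCD.
    * move=> W hW; case: (hWs W hW) => hWE heW haW hbW hcW.
      have -> : W :|: C = e |: (W :|: C :\ e).
        by apply/setP=> z; rewrite !inE; spl z e a b c; rewrite ?eqxx; bsimp; finC C hCD.
      rewrite cle ?addn0 //; try by subE.
      - by rewrite !inE haC hae orbT.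
      - by rewrite !inE hbC hbe orbT.
  + by rewrite !inE eqxx.
  + by move=> z; rewrite !inE; spl z e a b c; rewrite ?eqxx; bsimp; finC C hCD.
-
  have haD := hCD _ haC; have hbD : b \in D by move: hbCD; rewrite hbC.
  exists (b |: (C :\ e)), (e |: (D :\ b)); split.
  + apply: (@md_transfer _ M N C D _ _ 0 md).
    * by rewrite -setI_eq0; apply/eqP/setP=> z; rewrite !inE; spl z e a b c; rewrite ?eqxx; bsimp; finC C hCD.
    * by apply/setP=> z; rewrite !inE; spl z e a b c; rewrite ?eqxx; bsimp; finC C hCD.
    * move=> W hW; case: (hWs W hW) => hWE heW haW hbW hcW.
      have s1 : W :|: (b |: (C :\ e)) \subset ground M by subE.
      have m1 : a \in W :|: (b |: (C :\ e)) by memt.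
      have m2 : b \in W :|: (b |: (C :\ e)) by memt.
      rewrite -(cle _ m1 m2 s1) addn0.
      have -> : e |: (W :|: (b |: (C :\ e))) = b |: (W :|: C).
        by apply/setP=> z; rewrite !inE; spl z e a b c; rewrite ?eqxx; bsimp; finC C hCD.
      have s2 : W :|: C \subset ground M by subE.
      have m3 : e \in W :|: C by memt.
      have m4 : a \in W :|: C by memt.
      by rewrite clb.
  + by rewrite !inE eqxx.
  + by move=> z; rewrite !inE; spl z e a b c; rewrite ?eqxx; bsimp; finC C hCD.
-
  have hbD := hCD _ hbC; have haD : a \in D by move: haCD; rewrite haC.
  exists (a |: (C :\ e)), (e |: (D :\ a)); split.
  + apply: (@md_transfer _ M N C D _ _ 0 md).
    * by rewrite -setI_eq0; apply/eqP/setP=> z; rewrite !inE; spl z e a b c; rewrite ?eqxx; bsimp; finC C hCD.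
    * by apply/setP=> z; rewrite !inE; spl z e a b c; rewrite ?eqxx; bsimp; finC C hCD.
    * move=> W hW; case: (hWs W hW) => hWE heW haW hbW hcW.
      have s1 : W :|: (a |: (C :\ e)) \subset ground M by subE.
      have m1 : a \in W :|: (a |: (C :\ e)) by memt.
      have m2 : b \in W :|: (a |: (C :\ e)) by memt.
      rewrite -(cle _ m1 m2 s1) addn0.
      have -> : e |: (W :|: (a |: (C :\ e))) = a |: (W :|: C).
        by apply/setP=> z; rewrite !inE; spl z e a b c; rewrite ?eqxx; bsimp; finC C hCD.
      have s2 : W :|: C \subset ground M by subE.
      have m3 : e \in W :|: C by memt.
      have m4 : b \in W :|: C by memt.
      by rewrite cla.
  + by rewrite !inE eqxx.
  + by move=> z; rewrite !inE; spl z e a b c; rewrite ?eqxx; bsimp; finC C hCD.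
-
  have haD : a \in D by move: haCD; rewrite haC.
  have hbD : b \in D by move: hbCD; rewrite hbC.
  case hcC : (c \in C).
  + have hcD := hCD _ hcC.
    exists (a |: (b |: (C :\ e :\ c))), (e |: (c |: (D :\ a :\ b))); split.
    * apply: (@md_transfer _ M N C D _ _ 0 md).
      -- by rewrite -setI_eq0; apply/eqP/setP=> z; rewrite !inE; spl z e a b c; rewrite ?eqxx; bsimp; finC C hCD.
      -- by apply/setP=> z; rewrite !inE; spl z e a b c; rewrite ?eqxx; bsimp; finC C hCD.
      -- move=> W hW; case: (hWs W hW) => hWE heW haW hbW hcW.
         have hZ : W :|: (C :\ e :\ c) \subset H.
           rewrite subsetD; apply/andP; split; first by subE.
           by rewrite -setI_eq0; apply/eqP/setP=> z; rewrite !inE; spl z e a b c; rewrite ?eqxx; bsimp; finC C hCD.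
         have heZ : e |: (W :|: (C :\ e :\ c)) \subset H.
           rewrite subsetD; apply/andP; split; first by subE.
           by rewrite -setI_eq0; apply/eqP/setP=> z; rewrite !inE; spl z e a b c; rewrite ?eqxx; bsimp; finC C hCD.
         have -> : W :|: (a |: (b |: (C :\ e :\ c))) = a |: (b |: (W :|: (C :\ e :\ c))).
           by apply/setP=> z; rewrite !inE; spl z e a b c; rewrite ?eqxx; bsimp; finC C hCD.
         have -> : W :|: C = c |: (e |: (W :|: (C :\ e :\ c))).
           by apply/setP=> z; rewrite !inE; spl z e a b c; rewrite ?eqxx; bsimp; finC C hCD.
         by rewrite chain // indc // addn0.
    * by rewrite !inE eqxx.
    * by move=> z; rewrite !inE; spl z e a b c; rewrite ?eqxx; bsimp; finC C hCD.
  + have hcD : c \in D by move: hcCD; rewrite hcC.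
    exists (a |: (b |: (C :\ e))), (e |: (D :\ a :\ b)); split.
    * apply: (@md_transfer _ M N C D _ _ 1 md).
      -- by rewrite -setI_eq0; apply/eqP/setP=> z; rewrite !inE; spl z e a b c; rewrite ?eqxx; bsimp; finC C hCD.
      -- by apply/setP=> z; rewrite !inE; spl z e a b c; rewrite ?eqxx; bsimp; finC C hCD.
      -- move=> W hW; case: (hWs W hW) => hWE heW haW hbW hcW.
         have hZ : W :|: (C :\ e) \subset H.
           rewrite subsetD; apply/andP; split; first by subE.
           by rewrite -setI_eq0; apply/eqP/setP=> z; rewrite !inE; spl z e a b c; rewrite ?eqxx; bsimp; finC C hCD.
         have -> : W :|: (a |: (b |: (C :\ e))) = a |: (b |: (W :|: (C :\ e))).
           by apply/setP=> z; rewrite !inE; spl z e a b c; rewrite ?eqxx; bsimp; finC C hCD.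
         have -> : W :|: C = e |: (W :|: (C :\ e)).
           by apply/setP=> z; rewrite !inE; spl z e a b c; rewrite ?eqxx; bsimp; finC C hCD.
         by rewrite chain // addn1.
    * by rewrite !inE eqxx.
    * by move=> z; rewrite !inE; spl z e a b c; rewrite ?eqxx; bsimp; finC C hCD.
Qed.


Lemma minor_final (T : finType) (M N : matroid T) (C D E' : {set T}) :
  minor_data M N C D -> E' \subset D -> has_minor (mdel M E') N.
Proof.
case=> hdis hCDE hgN hrkN hED; exists C, (D :\: E').
have hCD : forall z, z \in C -> z \in D -> False.
  move=> z hzC hzD; move: hdis; rewrite -setI_eq0 => /eqP hI.
  have : z \in C :&: D by rewrite inE hzC hzD.
  by rewrite hI inE.
split.
- rewrite -setI_eq0; apply/eqP/setP=> z; rewrite !inE.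
  case hzC: (z \in C) => //=; case hzD: (z \in D); rewrite ?andbF //.
  by case: (hCD z hzC hzD).
- apply/subsetP=> z; rewrite /= !inE => hz.
  have hzE : z \in ground M.
    apply: (subsetP hCDE); rewrite inE; case/orP: hz => [->//|/andP[_ ->]]; by rewrite orbT.
  rewrite hzE andbT; case/orP: hz => [hzC|/andP[//]].
  apply/negP=> hzE'; exact: (hCD z hzC (subsetP hED _ hzE')).
- rewrite hgN /=; apply/setP=> z; rewrite !inE.
  case hzE': (z \in E'); rewrite /= ?andbF ?orbF //.
  + by rewrite (subsetP hED _ hzE') orbT.
- by move=> Z hZ; rewrite hrkN.
Qed.

Lemma minor_iter (T : finType) (M N : matroid T) (r : nat) (X : 'I_r -> {set T}) (e : 'I_r -> T) :
  has_minor M N ->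
  (forall i, X i \subset ground M) -> (forall i, [disjoint X i & ground N]) ->
  (forall i, e i \in X i) ->
  (forall i j x, x \in X i -> x \in X j -> i = j) ->
  (forall i, exists a b c, [/\ uniq [:: e i; a; b; c], triangle M [set e i; a; b],
      triad M [set a; b; c] & [/\ a \in X i, b \in X i & c \in X i]]) ->
  has_minor (mdel M [set e i | i : 'I_r]) N.
Proof.
move=> [C0 [D0 [h1 h2 h3 h4]]] hXE hXN he hdisj hfan.
have hnN : forall i x, x \in X i -> x \notin ground N.
  move=> i x hx; apply/negP=> hxN; move: (hXN i); rewrite -setI_eq0 => /eqP hI.
  have : x \in X i :&: ground N by rewrite inE hx hxN.
  by rewrite hI inE.
suff [C [D [md hD]]] : exists C D, minor_data M N C D /\ forall i, i \in index_enum 'I_r -> e i \in D.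
  apply: (minor_final md); apply/subsetP=> z /imsetP[i _ ->]; apply: hD; exact: mem_index_enum.
elim: (index_enum 'I_r) => [|x s [C [D [md hD]]]].
  by exists C0, D0; split.
have [a [b [c [hu htri htd [ha hb hc]]]]] := hfan x.
have [C' [D' [md' heD' hz]]] := swap md hu
  (And4 (subsetP (hXE x) _ (he x)) (subsetP (hXE x) _ ha) (subsetP (hXE x) _ hb) (subsetP (hXE x) _ hc))
  (And4 (hnN x _ (he x)) (hnN x _ ha) (hnN x _ hb) (hnN x _ hc)) htri htd.
exists C', D'; split=> // i; rewrite inE => /orP[/eqP ->//|his].
case: (eqVneq i x) => [->//|hix].
rewrite hz ?hD //.
rewrite !inE; apply/negP => /orP[/orP[/orP[]|]|] /eqP heq.
- by move/eqP: hix; apply; apply: (hdisj i x (e i)); rewrite ?he // heq he.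
- by move/eqP: hix; apply; apply: (hdisj i x (e i)); rewrite ?he // heq.
- by move/eqP: hix; apply; apply: (hdisj i x (e i)); rewrite ?he // heq.
- by move/eqP: hix; apply; apply: (hdisj i x (e i)); rewrite ?he // heq.
Qed.


Lemma tc_main (T : finType) (M : matroid T) theta (Tg : {set {set T}}) (r : nat)
  (X Y : 'I_r -> {set T}) (e a b : 'I_r -> T) :
  is_tangle M theta Tg -> three_connected M ->
  (forall i, Y i \in Tg) -> (forall i, conn M (Y i) <= 2) -> (forall i, X i \subset Y i) ->
  tangle_rk M theta Tg (\bigcup_(i < r) X i) = 2 * r -> 2 * r <= theta ->
  (forall i, e i \in X i) ->
  (forall i j x, x \in X i -> x \in X j -> i = j) ->
  (forall i, [/\ a i \in X i, b i \in X i, a i != e i, b i != e i & a i != b i]) ->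
  (forall i, rk M [set a i; b i] = 2 /\ rk M [set e i; a i; b i] = 2) ->
  (forall j, three_connected (mdel M [set e j])) ->
  three_connected (mdel M [set e i | i : 'I_r]).
Proof.
move=> htg h3 hY hY2 hXY hrk hth he hdisj hab hrab hdel k A hk hA hkA hkB.
rewrite leqNgt; apply/negP => hlt.
set G := ground M.
set E' := [set e i | i : 'I_r] in hA hkB hlt *.
rewrite /= -/G in hA hkB.
set B := (G :\: E') :\: A.
have hXE : forall i, X i \subset G.
  by move=> i; apply: subset_trans (hXY i) (tg_sub htg (hY i)).
have heE : forall i, e i \in G by move=> i; apply: (subsetP (hXE i)).
have inj : forall i j, e i = e j -> i = j.
  by move=> i j hij; apply: (hdisj i j (e i) (he i)); rewrite hij he.
have hE'G : E' \subset G by apply/subsetP=> z /imsetP[i _ ->].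
have notE' : forall i x, x \in X i -> x != e i -> x \notin E'.
  move=> i x hx hxe; apply/negP=> /imsetP[j _ hxj].
  have hxj' : x \in X j by rewrite hxj he.
  have eij := hdisj i j x hx hxj'.
  by move: hxe; rewrite hxj eij eqxx.
have hAG : A \subset G by apply: subset_trans hA (subsetDl _ _).
have hAE' : forall z, z \in A -> z \notin E'.
  by move=> z hz; have := subsetP hA _ hz; rewrite inE => /andP[].
have hBdef : forall z, (z \in B) = [&& z \notin A, z \notin E' & z \in G].
  by move=> z; rewrite !inE.
have hside : forall i, [/\ a i \in G, a i \notin E', b i \in G & b i \notin E'].
  move=> i; case: (hab i) => ha hb hae hbe _.
  by split; [exact: (subsetP (hXE i)) | exact: (notE' i _ ha hae) | exact: (subsetP (hXE i)) | exact: (notE' i _ hb hbe)].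
pose inA i := (a i \in A) && (b i \in A).
pose inB i := (a i \in B) && (b i \in B).
pose P := [set i | ~~ inA i && ~~ inB i].
pose SA := [set e i | i in [set i | inA i]].
pose SB := [set e i | i in [set i | inB i]].
pose A' := A :|: SA.
pose B' := B :|: SB.
pose EP := [set e i | i in P].
have heE' : forall i, e i \in E' by move=> i; apply: imset_f.
have hEPE' : EP \subset E' by apply/subsetP=> z /imsetP[i _ ->].
have hBG : B \subset G by apply: subset_trans (subsetDl _ _) (subsetDl _ _).
have hBE' : forall z, z \in B -> z \notin E' by move=> z; rewrite hBdef => /and3P[].
have f1 : A' :&: B' = set0.
  apply/eqP; rewrite -subset0; apply/subsetP => z; rewrite inE => /andP[].
  rewrite /A' /B' !in_setU.
  case/orP=> [hzA|/imsetP[i hiA hz]]; case/orP=> [hzB|/imsetP[j hjB hz']].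
  - by move: hzB; rewrite hBdef hzA.
  - by move: (hAE' z hzA); rewrite hz' heE'.
  - by move: (hBE' z hzB); rewrite hz heE'.
  - rewrite hz' in hz; have eij := inj _ _ hz; subst j.
    by move: hiA hjB; rewrite !inE => /andP[ha _] /andP[]; rewrite hBdef ha.
have f2 : A' :|: B' = G :\: EP.
  apply/setP=> z; apply/idP/idP.
  - rewrite /A' /B' !in_setU in_setD => /orP[/orP[hzA|/imsetP[i hi ->]]|/orP[hzB|/imsetP[i hi ->]]].
    + rewrite (subsetP hAG _ hzA) andbT; apply/negP => hzEP.
      by move: (hAE' z hzA); rewrite (subsetP hEPE' _ hzEP).
    + rewrite heE andbT; apply/negP => /imsetP[p hp hep]; have eip := inj _ _ hep; subst p.
      by move: hp hi; rewrite !inE => /andP[hnA _] hA'; rewrite hA' in hnA.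
    + rewrite (subsetP hBG _ hzB) andbT; apply/negP => hzEP.
      by move: (hBE' z hzB); rewrite (subsetP hEPE' _ hzEP).
    + rewrite heE andbT; apply/negP => /imsetP[p hp hep]; have eip := inj _ _ hep; subst p.
      by move: hp hi; rewrite !inE => /andP[_ hnB] hB'; rewrite hB' in hnB.
  - rewrite in_setD => /andP[hzEP hzG]; rewrite /A' /B' !in_setU.
    case hzE': (z \in E').
    + case/imsetP: hzE' => i _ hzi; subst z.
      have : ~~ (i \in P) by apply/negP=> hiP; move: hzEP; rewrite (imset_f e hiP).
      rewrite inE negb_and !negbK => /orP[hiA|hiB].
      * have hS : e i \in SA by apply/imsetP; exists i; rewrite ?inE.
        by rewrite hS !orbT.
      * have hS : e i \in SB by apply/imsetP; exists i; rewrite ?inE.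
        by rewrite hS !orbT.
    + case hzA: (z \in A) => //=.
      by rewrite hBdef hzA hzE' hzG orbT.
have hSAG : SA \subset G by apply/subsetP=> z /imsetP[i _ ->].
have hSBG : SB \subset G by apply/subsetP=> z /imsetP[i _ ->].
have f3A : rk M A' = rk M A.
  apply: (rk_cl_set hAG hSAG) => z /imsetP[i]; rewrite inE => /andP[ha hb] ->.
  by case: (hrab i) => h1 h2; apply: tri_cl h1 h2 ha hb hAG (heE i).
have f3B : rk M B' = rk M B.
  apply: (rk_cl_set hBG hSBG) => z /imsetP[i]; rewrite inE => /andP[ha hb] ->.
  by case: (hrab i) => h1 h2; apply: tri_cl h1 h2 ha hb hBG (heE i).
have hcomp : (G :\: EP) :\: A' = B'.
  rewrite -f2; apply/setP=> z; rewrite in_setD in_setU.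
  case hzA: (z \in A'); rewrite /= ?andbF //.
  case hzB: (z \in B') => //=.
  have : z \in A' :&: B' by rewrite inE hzA hzB.
  by rewrite f1 inE.
have f4 : conn (mdel M EP) A' < k.
  move: hlt; rewrite /conn /mrank /= -/G hcomp -/B f3A f3B.
  have : rk M (G :\: E') <= rk M (G :\: EP).
    apply: rk_mono; [by apply: setDS | exact: subsetDl].
  lia.
have hA'sub : A' \subset G :\: EP by rewrite -f2 subsetUl.
have hkA' : k <= #|A'| by apply: leq_trans hkA _; apply: subset_leq_card; apply: subsetUl.
have hkB' : k <= #|(G :\: EP) :\: A'|.
  rewrite hcomp; apply: leq_trans hkB _; apply: subset_leq_card; apply: subsetUl.
have hk2 : k < 3 by case/andP: hk.
case: (leqP #|P| 1) => hP.
- have h3' : three_connected (mdel M EP).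
    move: hP; rewrite leq_eqVlt ltnS leqn0 => /orP[/cards1P[j hj] | /eqP/cards0_eq hj].
    + rewrite /EP hj imset_set1; exact: hdel.
    + rewrite /EP hj imset0; exact: tc_del0.
  have := h3' k A' hk hA'sub hkA' hkB'; lia.
- apply: (@key_contra T M theta Tg r X Y e P A' B' htg h3 hY hY2 hXY hrk hth he hP f1 f2).
  + have h1 : conn M A' <= conn (mdel M EP) A' + #|EP| := conn_del_le (subset_trans hEPE' hE'G) hA'sub.
    have h2 : #|EP| <= #|P| by apply: leq_imset_card.
    have h3x : conn (mdel M EP) A' <= 1 by rewrite -ltnS; apply: leq_trans f4 _.
    apply: (leq_trans h1); rewrite -add1n; exact: leq_add.
  + have hB'sub : B' \subset G :\: EP by rewrite -f2 subsetUr.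
    have h1 : conn M B' <= conn (mdel M EP) B' + #|EP| := conn_del_le (subset_trans hEPE' hE'G) hB'sub.
    have h2 : #|EP| <= #|P| by apply: leq_imset_card.
    have h4 : conn (mdel M EP) B' = conn (mdel M EP) A'.
      by rewrite -hcomp; apply: (@conn_sym _ (mdel M EP)).
    have h3x : conn (mdel M EP) B' <= 1 by rewrite h4 -ltnS; apply: leq_trans f4 _.
    apply: (leq_trans h1); rewrite -add1n; exact: leq_add.
  + move=> p; rewrite inE => /andP[hnA hnB].
    case: (hside p) => haG haE hbG hbE; case: (hab p) => hap hbp _ _ _.
    have hAB : forall z, z \in G -> z \notin E' -> (z \in A) || (z \in B).
      by move=> z hzG hzE; rewrite hBdef hzE hzG; case: (z \in A).
    case/orP: (hAB _ haG haE) => hpa.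
    * have hpb : b p \in B.
        by case/orP: (hAB _ hbG hbE) => // hpb; move: hnA; rewrite /inA hpa hpb.
      by exists (a p), (b p); split; rewrite // /A' /B' in_setU ?hpa ?hpb.
    * have hpb : b p \in A.
        by case/orP: (hAB _ hbG hbE) => // hpb; move: hnB; rewrite /inB hpa hpb.
      by exists (b p), (a p); split; rewrite // /A' /B' in_setU ?hpa ?hpb.
Qed.


Unset Implicit Arguments. Set Strict Implicit.

Theorem lemma3p4 (T : finType) (M N : matroid T) (theta : nat)
    (Tg : {set {set T}}) (r : nat) (X : 'I_r -> {set T})
    (F : 'I_r -> seq T) (e : 'I_r -> T) :
  three_connected M ->
  is_tangle M theta Tg ->
  has_minor M N ->
  (forall i, long_line (ground M) (tangle_rk M theta Tg) (X i)) ->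
  tangle_rk M theta Tg (\bigcup_(i < r) X i) = 2 * r ->
  (forall i, [disjoint X i & ground N]) ->
  (forall i, maximal_fan M (F i) /\ 4 <= size (F i) /\ {subset F i <= X i}) ->
  (forall i, e i \in F i /\
     three_connected (mdel M [set e i]) /\ has_minor (mdel M [set e i]) N) ->
  three_connected (mdel M [set e i | i : 'I_r]) /\
  has_minor (mdel M [set e i | i : 'I_r]) N.
Proof.
move=> h3 htg hmin hline hrk hXN hfan he.
have hth : 2 * r <= theta by rewrite -hrk; apply: trk_le_theta.
have hXE : forall i, X i \subset ground M by move=> i; case: (hline i) => [[]].
have hX3 : forall i, 3 <= #|X i| by move=> i; case: (hline i).
have hX2 : forall i, tangle_rk M theta Tg (X i) = 2 by move=> i; case: (hline i).
have heX : forall i, e i \in X i.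
  by move=> i; case: (hfan i) => _ [_ hs]; apply: hs; case: (he i).
case: (ltnP r 2) => hr.
- case: (posnP r) => hr0.
  + have -> : [set e i | i : 'I_r] = set0.
      apply/setP=> z; rewrite inE; apply/negP => /imsetP[[i hi] _ _]; lia.
    split; first exact: tc_del0.
    case: hmin => C [D [h1 h2 h3' h4]]; exists C, D; split; rewrite /= ?setD0 //.
  + pose i0 : 'I_r := Ordinal hr0.
    have -> : [set e i | i : 'I_r] = [set e i0].
      apply/setP=> z; rewrite inE; apply/imsetP/eqP => [[i _ ->]|->]; last by exists i0.
      by congr e; apply: val_inj => /=; case: i => /= m hm; lia.
    by case: (he i0) => _.
- have hth4 : 2 < theta by lia.
  pose condY i (Y : {set T}) := [&& Y \in Tg, X i \subset Y & conn M Y <= 2].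
  pose Yf i := odflt set0 [pick Y | condY i Y].
  have hYf : forall i, condY i (Yf i).
    move=> i; rewrite /Yf; case: pickP => [Y hY //|hnone].
    have := trk_ex (_ : tangle_rk M theta Tg (X i) < theta); rewrite hX2 => /(_ hth4).
    case=> Y [h1 h2 h3']; by move: (hnone Y); rewrite /condY h1 h2 h3'.
  have hY : forall i, Yf i \in Tg by move=> i; case/and3P: (hYf i).
  have hXY : forall i, X i \subset Yf i by move=> i; case/and3P: (hYf i).
  have hY2 : forall i, conn M (Yf i) <= 2 by move=> i; case/and3P: (hYf i).
  have hdisj : forall i j x, x \in X i -> x \in X j -> i = j.
    move=> i j x hxi hxj; case: (eqVneq i j) => // hij; exfalso.
    have hYiE := tg_sub htg (hY i); have hYjE := tg_sub htg (hY j).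
    have hsub := conn_submod hYiE hYjE.
    have hI1 : 1 <= conn M (Yf i :&: Yf j).
      apply: (tc_ge h3) => //.
      + exact: subset_trans (subsetIl _ _) hYiE.
      + rewrite card_gt0; apply/set0Pn; exists x.
        by rewrite inE (subsetP (hXY i) _ hxi) (subsetP (hXY j) _ hxj).
      + have h1 := tg_card htg (hY i).
        have h2 : #|ground M :\: Yf i| <= #|ground M :\: (Yf i :&: Yf j)|.
          by apply: subset_leq_card; apply: setDS; apply: subsetIl.
        lia.
    have hU : Yf i :|: Yf j \in Tg.
      apply: (tg_union htg) => //; have := hY2 i; have := hY2 j; lia.
    apply: (@final_contra T M theta Tg r X Yf (Yf i :|: Yf j) [set i; j] htg h3 hY hY2 hXY hrk hth hU).
    + move=> p; rewrite !inE => /orP[] /eqP ->.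
      * apply: leq_trans (ltnW (hX3 i)) _; apply: subset_leq_card.
        by rewrite subsetI (subset_trans (hXY i) (subsetUl _ _)) hXY.
      * apply: leq_trans (ltnW (hX3 j)) _; apply: subset_leq_card.
        by rewrite subsetI (subset_trans (hXY j) (subsetUr _ _)) hXY.
    + rewrite cards2 hij; have := hY2 i; have := hY2 j; lia.
  have hE5 : 5 <= #|ground M|.
    pose i0 : 'I_r := Ordinal (ltn_trans (ltnSn 0) hr).
    pose i1 : 'I_r := Ordinal hr.
    have hne : i0 != i1 by [].
    have hI : X i0 :&: X i1 = set0.
      apply/setP=> z; rewrite !inE; apply/negP => /andP[h1 h2].
      by move: hne; rewrite (hdisj _ _ _ h1 h2) eqxx.
    have := cardsU (X i0) (X i1); rewrite hI cards0 subn0 => hU.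
    have : #|X i0 :|: X i1| <= #|ground M| by apply: subset_leq_card; rewrite subUset !hXE.
    have := hX3 i0; have := hX3 i1; lia.
  have hfd : forall i, exists a b c, [/\ uniq [:: e i; a; b; c], triangle M [set e i; a; b],
      triad M [set a; b; c] & [/\ a \in X i, b \in X i & c \in X i]].
    move=> i; case: (hfan i) => [[hf _] [hsz hsub]]; case: (he i) => heF [hdel _].
    have [a [b [c [htri htd hu [ha hb hc]]]]] := fan_end hf hsz heF
      (fun Tr hTr => introN idP (fun hx => triad_del hTr hx hE5 hdel)).
    by exists a, b, c; split => //; split; apply: hsub.
  split; last first.
    by apply: (minor_iter hmin hXE hXN heX hdisj hfd).
  pose cnd i (p : T * T) := [&& p.1 \in X i, p.2 \in X i, p.1 != e i, p.2 != e i, p.1 != p.2,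
      rk M [set p.1; p.2] == 2 & rk M [set e i; p.1; p.2] == 2].
  pose pf i := odflt (e i, e i) [pick p | cnd i p].
  have hpf : forall i, cnd i (pf i).
    move=> i; rewrite /pf; case: pickP => [p hp //|hnone].
    have [a [b [c [hu [hTs hT3 hT2 hTsub] _ [ha hb _]]]]] := hfd i.
    move: hu; rewrite /= !inE !negb_or => /and4P[/and3P[hea heb _] /andP[hab _] _ _].
    have hr2 : rk M [set a; b] = 2.
      apply: hTsub; last by rewrite cards2 hab.
      by apply/subsetP=> z; rewrite !inE => /orP[] /eqP ->; rewrite eqxx ?orbT.
    move: (hnone (a, b)); rewrite /cnd /= ha hb hr2 hT2 !eqxx /= hab.
    by rewrite eq_sym hea eq_sym heb.
  apply: (@tc_main T M theta Tg r X Yf e (fun i => (pf i).1) (fun i => (pf i).2) htg h3 hY hY2 hXY hrk hth heX hdisj).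
  - by move=> i; case/and5P: (hpf i) => h1 h2 h4 h5 /and3P[h6 _ _]; split.
  - by move=> i; case/and5P: (hpf i) => _ _ _ _ /and3P[_ /eqP -> /eqP ->].
  - by move=> j; case: (he j) => _ [].
Qed.
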